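(* Let $l<u$ be real, let $\Delta Q$ be real with $0<\Delta Q\le u-l$, and let $\epsilon\ge0$, $0\le\delta<1$. Let $b^*>0$ satisfy $f(b^* )=b^*$. Then for every $\xi>0$, $f(b^*+\xi)$ is defined and $b^*+\xi> f(b^*+\xi)$.
   Context: For $b>0$ and $p\in[l,u]$, $C_p(b)= 1-\frac12\left(e^{-\frac{p-l}{b}}+e^{-\frac{u-p}{b}}\right)$ (the integral $\int_l^u\frac{1}{2b}e^{-|x-p|/b}dx$), and $\Delta C(b)=\frac{C_{l+\Delta Q}(b)}{C_l(b)}$. The map $f$ is defined for $b>0$ with $\epsilon-\log\Delta C(b)-\log(1-\delta)\neq 0$ by $f(b)=\frac{\Delta Q}{\epsilon-\log\Delta C(b)-\log(1-\delta)}$. *)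

(* Defs.v *)
From Stdlib Require Import Reals Lra.
Open Scope R_scope.

Definition Cp (l u p b : R) : R :=
  1 - / 2 * (exp (- ((p - l) / b)) + exp (- ((u - p) / b))).

Definition DeltaC (l u dQ b : R) : R := Cp l u (l + dQ) b / Cp l u l b.

Definition fden (l u dQ eps delta b : R) : R :=
  eps - ln (DeltaC l u dQ b) - ln (1 - delta).

Definition f_defined (l u dQ eps delta b : R) : Prop :=
  0 < b /\ fden l u dQ eps delta b <> 0.

Definition fmap (l u dQ eps delta b : R) : R := dQ / fden l u dQ eps delta b.

(* Main.v *)
Require Import Defs.
From Stdlib Require Import Reals Lra Psatz.
Open Scope R_scope.

Lemma exp_le_mono (p q : R) : p <= q -> exp p <= exp q.
Proof. intros [H|H]; [left; apply exp_increasing; exact H| subst; lra]. Qed.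

Lemma DC_form l u a b : 0 < b ->
  DeltaC l u a b =
  (1 - / 2 * (exp (- (a / b)) + exp (- ((u - l - a) / b)))) /
  (1 - / 2 * (1 + exp (- (a / b)) * exp (- ((u - l - a) / b)))).
Proof.
  intros Hb. unfold DeltaC, Cp.
  replace (l + a - l) with a by ring.
  replace (u - (l + a)) with (u - l - a) by ring.
  replace (l - l) with 0 by ring.
  replace (- (0 / b)) with 0 by (field; lra). rewrite exp_0.
  rewrite <- exp_plus.
  replace (- (a / b) + - ((u - l - a) / b)) with (- ((u - l) / b)) by (field; lra).
  reflexivity.
Qed.

Lemma F_mono x1 x2 y1 y2 : 0 < x1 -> x1 <= x2 -> x2 < 1 -> 0 < y1 -> y1 <= y2 -> y2 <= 1 ->
  0 < (1 - / 2 * (x2 + y2)) /  (1 - / 2 * (1 + x2 * y2)) /\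
  (1 - / 2 * (x2 + y2)) /  (1 - / 2 * (1 + x2 * y2)) <=
  (1 - / 2 * (x1 + y1)) /  (1 - / 2 * (1 + x1 * y1)).
Proof.
  intros. assert (x2*y2 < 1) by nra. assert (x1*y1 < 1) by nra.
  split.
  - apply Rdiv_lt_0_compat; lra.
  - apply Rmult_le_reg_r with ((1 - / 2 * (1 + x2 * y2))*(1 - / 2 * (1 + x1 * y1))).
    nra.
    field_simplify; try lra.
    assert (0 <= (x2-x1)*(1-y1)*(1-y2)) by (apply Rmult_le_pos; [apply Rmult_le_pos|]; lra).
    assert (0 <= (y2-y1)*(1-x2)*(1-x1)) by (apply Rmult_le_pos; [apply Rmult_le_pos|]; lra).
    nra.
Qed.

Lemma DC_mono l u a b1 b2 : l < u -> 0 < a -> a <= u - l -> 0 < b1 -> b1 <= b2 ->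
  0 < DeltaC l u a b2 /\ DeltaC l u a b2 <= DeltaC l u a b1.
Proof.
  intros Hlu Ha HaL Hb1 Hb12.
  rewrite (DC_form l u a b1 Hb1), (DC_form l u a b2 ltac:(lra)).
  apply F_mono.
  - apply exp_pos.
  - apply exp_le_mono. apply Ropp_le_contravar. unfold Rdiv.
    apply Rmult_le_compat_l; [lra|]. apply Rinv_le_contravar; lra.
  - rewrite <- exp_0. apply exp_increasing.
    assert (0 < a / b2) by (apply Rdiv_lt_0_compat; lra). lra.
  - apply exp_pos.
  - apply exp_le_mono. apply Ropp_le_contravar. unfold Rdiv.
    apply Rmult_le_compat_l; [lra|]. apply Rinv_le_contravar; lra.
  - rewrite <- exp_0. apply exp_le_mono.
    assert (0 <= (u - l - a) / b2) by (unfold Rdiv; apply Rmult_le_pos; [lra| left; apply Rinv_0_lt_compat; lra]). lra.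
Qed.

Theorem mainTheorem9 (l u dQ eps delta bstar : R) :
  l < u ->
  0 < dQ -> dQ <= u - l ->
  0 <= eps -> 0 <= delta -> delta < 1 ->
  0 < bstar ->
  f_defined l u dQ eps delta bstar ->
  fmap l u dQ eps delta bstar = bstar ->
  forall xi : R, 0 < xi ->
    f_defined l u dQ eps delta (bstar + xi) /\
    bstar + xi > fmap l u dQ eps delta (bstar + xi).
Proof.
  intros Hlu Ha HaL He Hd Hd1 Hb [_ Hne] Hfix xi Hxi.
  unfold fmap in *.
  set (g0 := fden l u dQ eps delta bstar) in *.
  assert (Hg0 : 0 < g0).
  { destruct (Rlt_or_le 0 g0) as [H|H]; auto.
    assert (g0 < 0) by lra.
    assert (dQ / g0 < 0). { unfold Rdiv. apply Rmult_pos_neg; [lra| apply Rinv_lt_0_compat; lra]. }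
    lra. }
  assert (Hfx : dQ = bstar * g0).
  { rewrite <- Hfix. field. lra. }
  destruct (DC_mono l u dQ bstar (bstar + xi) Hlu Ha HaL Hb ltac:(lra)) as [Hp Hm].
  assert (Hg : g0 <= fden l u dQ eps delta (bstar + xi)).
  { unfold g0, fden.
    assert (ln (DeltaC l u dQ (bstar + xi)) <= ln (DeltaC l u dQ bstar)).
    { destruct Hm as [Hm|Hm]; [left; apply ln_increasing; auto | rewrite Hm; lra]. }
    lra. }
  split.
  - split; lra.
  - apply Rlt_gt. apply Rmult_lt_reg_r with (fden l u dQ eps delta (bstar + xi)); [lra|].
    set (G := fden l u dQ eps delta (bstar + xi)) in *.
    unfold Rdiv. rewrite Rmult_assoc, Rinv_l by lra. rewrite Rmult_1_r, Hfx.
    assert (0 <= (bstar+xi) * (G - g0)) by (apply Rmult_le_pos; lra). nra.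
Qed.
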